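(* Fix a general instance satisfying the unique-default-action assumption, with relevant-action tie-breaking, and a true bias $\alpha^\star\in(0,1]$. At least one of the following holds. 1. There exist constants $c>0$ and $\varepsilon>0$ such that, for every interval $J\subseteq(0,1]$ with $\alpha^\star\in J$ and $|J|\le\varepsilon$, every interval-safe vertex-supported optimizer $\tau$ on $J$ satisfies $P_{\rm info}^J(\tau)\ge c$. 2. There exists a true-bias optimal scheme $\tau^\star$ with $P_{\rm info}^{\alpha^\star}(\tau^\star)=0$.
   Context: General model: finite $\Omega$ and $A$, full-support prior $\mu_0$, utilities $u_S,u_R:A\times\Omega\to\mathbb R$, and $\Delta u_{a,a'}(\omega)=u_R(a,\omega)-u_R(a',\omega)$. A receiver with bias $\alpha\in(0,1]$ best-responds to $(1-\alpha)\mu_0+\alpha\nu$. Action regions. For $\alpha\in(0,1]$ set $b_{a,a'}(\alpha)=\frac{\alpha-1}{\alpha}\Delta u_{a,a'}^\top\mu_0$ and $R_a^\alpha=\{\nu\in\Delta(\Omega):\Delta u_{a,a'}^\top\nu\ge b_{a,a'}(\alpha)\ \forall a'\ne a\}$. For an interval $J=[\underline\alpha,\overline\alpha]\subseteq(0,1]$ set $b_{a,a'}(J)=\max\{b_{a,a'}(\underline\alpha),b_{a,a'}(\overline\alpha)\}$, $R_a^J=\{\nu\in\Delta(\Omega):\Delta u_{a,a'}^\top\nu\ge b_{a,a'}(J)\ \forall a'\ne a\}$, and $\mathrm{int}_{IC}(R_a^J)$ the same set with strict inequalities. Relevant actions: $A_{\rm rel}$ is the set of actions that are the unique maximizer of $\sum_\omega((1-\alpha^\star)\mu_0(\omega)+\alpha^\star\nu(\omega))u_R(\cdot,\omega)$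 for some $\nu\in\Delta(\Omega)$. Tie-breaking: the receiver never picks an action outside $A_{\rm rel}$ and breaks ties among relevant actions in the sender's favor. Unique default action: $\arg\max_a\sum_\omega\mu_0(\omega)u_R(a,\omega)=\{a_0\}$. Schemes. A scheme is a finite list of triples $(p_i,\nu_i,a_i)$ with $p_i\ge0$, $\sum p_i=1$, $\sum p_i\nu_i=\mu_0$, and value $\sum_ip_i\sum_\omega\nu_i(\omega)u_S(a_i,\omega)$. - A true-bias optimal scheme has $a_i\in A_{\rm rel}$, $\nu_i\in R_{a_i}^{\alpha^\star}$, and maximal value among such schemes. - An interval-safe vertex-supported optimizer on $J$ is a scheme with $\mathrm{int}_{IC}(R_{a_i}^J)\ne\emptyset$ and $\nu_i$ a vertex of the polytope $R_{a_i}^J$, whose value equals the supremum of values over all schemes with $\nu_i\in R_{a_i}^J$ and $\mathrm{int}_{IC}(R_{a_i}^J)\neq\emptyset$. Informative posteriors. A pair $(a,a')$ is movable if $\Delta u_{a,a'}^\top\mu_0\ne0$. - $P_{\rm info}^J(\tau)$ is the total mass $p_i$ of atoms such that $\Delta u_{a_i,a'}^\top\nu_i=b_{a_i,a'}(J)$ for some movable pair $(a_i,a')$. - $P_{\rm info}^{\alpha^\star}(\tau)$ is defined the same way with $b_{a_i,a'}(\alpha^\star)$ in place of $b_{a_i,a'}(J)$. *)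

(* Defs.v *)
From mathcomp Require Import all_boot all_order all_algebra.
From mathcomp Require Import reals.
From Stdlib Require Lists.List.
Set Implicit Arguments. Unset Strict Implicit. Unset Printing Implicit Defensive.
Import Order.TTheory GRing.Theory Num.Theory.
Local Open Scope ring_scope.

Record atom (R : realType) (Omega A : finType) := Atom {
  atom_p : R ; atom_nu : Omega -> R ; atom_a : A }.
Definition scheme (R : realType) (Omega A : finType) := seq (atom R Omega A).

Section BP.
Context (R : realType) (Omega A : finType).

Definition belief (nu : Omega -> R) : Prop :=
  (forall w, 0 <= nu w) /\ \sum_(w : Omega) nu w = 1.

Definition full_support_prior (mu0 : Omega -> R) : Prop :=
  (forall w, 0 < mu0 w) /\ \sum_(w : Omega) mu0 w = 1.

Context (mu0 : Omega -> R) (uS uR : A -> Omega -> R).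

Definition du (a a' : A) (nu : Omega -> R) : R :=
  \sum_(w : Omega) (uR a w - uR a' w) * nu w.

Definition b_alpha (a a' : A) (alpha : R) : R :=
  (alpha - 1) / alpha * du a a' mu0.

Definition b_J (a a' : A) (lo hi : R) : R :=
  Num.max (b_alpha a a' lo) (b_alpha a a' hi).

Definition region_alpha (a : A) (alpha : R) (nu : Omega -> R) : Prop :=
  belief nu /\ forall a', a' != a -> b_alpha a a' alpha <= du a a' nu.

Definition region_J (a : A) (lo hi : R) (nu : Omega -> R) : Prop :=
  belief nu /\ forall a', a' != a -> b_J a a' lo hi <= du a a' nu.

Definition intIC_J (a : A) (lo hi : R) (nu : Omega -> R) : Prop :=
  belief nu /\ forall a', a' != a -> b_J a a' lo hi < du a a' nu.

Definition is_vertex (P : (Omega -> R) -> Prop) (nu : Omega -> R) : Prop :=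
  P nu /\ forall (x y : Omega -> R) (t : R), P x -> P y -> 0 < t < 1 ->
    (forall w, nu w = t * x w + (1 - t) * y w) -> forall w, x w = y w.

Definition EuR (a : A) (q : Omega -> R) : R := \sum_(w : Omega) q w * uR a w.

Definition relevant (alpha : R) (a : A) : Prop :=
  exists nu : Omega -> R, belief nu /\
    forall a', a' != a ->
      EuR a' (fun w => (1 - alpha) * mu0 w + alpha * nu w)
      < EuR a (fun w => (1 - alpha) * mu0 w + alpha * nu w).

Definition unique_default : Prop :=
  exists a0 : A, forall a, a != a0 -> EuR a mu0 < EuR a0 mu0.

Definition is_scheme (tau : scheme R Omega A) : Prop :=
  (forall t, Stdlib.Lists.List.In t tau -> 0 <= atom_p t) /\
  \sum_(t <- tau) atom_p t = 1 /\
  (forall w, \sum_(t <- tau) atom_p t * atom_nu t w = mu0 w).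

Definition value (tau : scheme R Omega A) : R :=
  \sum_(t <- tau) atom_p t * \sum_(w : Omega) atom_nu t w * uS (atom_a t) w.

Definition true_bias_feasible (alpha : R) (tau : scheme R Omega A) : Prop :=
  is_scheme tau /\ forall t, Stdlib.Lists.List.In t tau ->
    relevant alpha (atom_a t) /\ region_alpha (atom_a t) alpha (atom_nu t).

Definition true_bias_optimal (alpha : R) (tau : scheme R Omega A) : Prop :=
  true_bias_feasible alpha tau /\
  forall sigma, true_bias_feasible alpha sigma -> value sigma <= value tau.

Definition interval_safe_feasible (lo hi : R) (tau : scheme R Omega A) : Prop :=
  is_scheme tau /\ forall t, Stdlib.Lists.List.In t tau ->
    region_J (atom_a t) lo hi (atom_nu t) /\
    exists nu, intIC_J (atom_a t) lo hi nu.

(* interval-safe vertex-supported optimizer on J = [lo, hi]; its value equals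
   the supremum of the feasible values, i.e. (since it is itself feasible) it
   is an upper bound of them. *)
Definition interval_safe_vertex_optimizer (lo hi : R) (tau : scheme R Omega A)
  : Prop :=
  interval_safe_feasible lo hi tau /\
  (forall t, Stdlib.Lists.List.In t tau ->
     is_vertex (region_J (atom_a t) lo hi) (atom_nu t)) /\
  forall sigma, interval_safe_feasible lo hi sigma -> value sigma <= value tau.

Definition movable (a a' : A) : bool := du a a' mu0 != 0.

Definition P_info_J (lo hi : R) (tau : scheme R Omega A) : R :=
  \sum_(t <- tau | [exists a', movable (atom_a t) a' &&
                     (du (atom_a t) a' (atom_nu t) == b_J (atom_a t) a' lo hi)])
    atom_p t.

Definition P_info_alpha (alpha : R) (tau : scheme R Omega A) : R :=
  \sum_(t <- tau | [exists a', movable (atom_a t) a' &&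
                     (du (atom_a t) a' (atom_nu t) == b_alpha (atom_a t) a' alpha)])
    atom_p t.

End BP.

(* Main.v *)
Require Import Defs.
From mathcomp Require Import all_boot all_order all_algebra.
From mathcomp Require Import reals.
From mathcomp Require Import ring lra.
From mathcomp Require Import boolp classical_sets topology normedtype matrix_normedtype derive.
Import Order.TTheory GRing.Theory Num.Theory.
Import numFieldTopology.Exports numFieldNormedType.Exports.
Local Open Scope ring_scope.

Section Basic.
Context {R : realType}.

Lemma fin_small (I : finType) (P : I -> R -> Prop) :
  (forall i, exists2 e : R, 0 < e & forall s : R, 0 < s -> s <= e -> P i s) ->
  exists2 e : R, 0 < e & forall i (s : R), 0 < s -> s <= e -> P i s.
Proof.
move=> H.
suff [e e0 He] : exists2 e : R, 0 < e & forall i, i \in enum I -> forall s, 0 < s -> s <= e -> P i s.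
  by exists e => // i s s0 se; apply: He => //; rewrite mem_enum.
elim: (enum I) => [|i r [e2 e20 IH]]; first by exists 1.
have [e1 e10 H1] := H i.
exists (Num.min e1 e2); first by rewrite lt_min e10 e20.
move=> j; rewrite inE => /orP [/eqP -> | jr] s s0; rewrite le_min => /andP [se1 se2].
  exact: H1.
exact: IH.
Qed.

Lemma small_lin (r q : R) : 0 < r ->
  exists2 e : R, 0 < e & forall s : R, 0 < s -> s <= e -> `|s * q| < r.
Proof.
move=> r0; exists (r / (`|q| + 1)).
  by apply: divr_gt0 => //; rewrite ltr_wpDl.
move=> s s0 se; rewrite normrM (gtr0_norm s0).
apply: (le_lt_trans (y := r / (`|q| + 1) * `|q|)).
  by apply: ler_wpM2r.
rewrite mulrAC ltr_pdivrMr; last by rewrite ltr_wpDl.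
by rewrite ltr_pM2l // ltrDl.
Qed.

Lemma small_lin2 (r q : R) : 0 < r ->
  exists2 e : R, 0 < e & forall s : R, 0 < s -> s <= e -> 0 < r + s * q /\ 0 < r - s * q.
Proof.
move=> r0; have [e e0 H] := small_lin r q r0; exists e => // s s0 se.
have := H s s0 se; rewrite ltr_norml => /andP [h1 h2]; split; lra.
Qed.

End Basic.

Section Model.
Context {R : realType} {Omega A : finType} (mu0 : Omega -> R) (uS uR : A -> Omega -> R).

Local Notation du := (du uR).
Local Notation b := (b_alpha mu0 uR).
Local Notation bJ := (b_J mu0 uR).

Lemma du_ext a a' (f g : Omega -> R) : (forall w, f w = g w) -> du a a' f = du a a' g.
Proof. by move=> H; apply: eq_bigr => w _; rewrite H. Qed.

Lemma du_aff a a' (f g : Omega -> R) (s : R) :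
  du a a' (fun w => f w + s * (g w - f w)) = du a a' f + s * (du a a' g - du a a' f).
Proof.
rewrite /Defs.du -sumrB mulr_sumr -big_split /=; apply: eq_bigr => w _; ring.
Qed.

Lemma du_comb a a' (f g : Omega -> R) (x y : R) :
  du a a' (fun w => x * f w + y * g w) = x * du a a' f + y * du a a' g.
Proof.
rewrite /Defs.du !mulr_sumr -big_split /=; apply: eq_bigr => w _; ring.
Qed.

Lemma sum_aff (f g : Omega -> R) (s : R) :
  \sum_w (f w + s * (g w - f w)) = \sum_w f w + s * (\sum_w g w - \sum_w f w).
Proof. by rewrite -sumrB mulr_sumr -big_split /=; apply: eq_bigr => w _; ring. Qed.

Lemma du_gen a a' (f g h : Omega -> R) (s : R) :
  du a a' (fun w => f w + s * (g w - h w)) = du a a' f + s * (du a a' g - du a a' h).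
Proof.
rewrite /Defs.du -sumrB mulr_sumr -big_split /=; apply: eq_bigr => w _; ring.
Qed.

Lemma sum_gen (f g h : Omega -> R) (s : R) :
  \sum_w (f w + s * (g w - h w)) = \sum_w f w + s * (\sum_w g w - \sum_w h w).
Proof. by rewrite -sumrB mulr_sumr -big_split /=; apply: eq_bigr => w _; ring. Qed.

Lemma sum_comb (f g : Omega -> R) (x y : R) :
  \sum_w (x * f w + y * g w) = x * \sum_w f w + y * \sum_w g w.
Proof. by rewrite !mulr_sumr -big_split. Qed.

Lemma duaa a nu : du a a nu = 0.
Proof. by rewrite /Defs.du big1 // => w _; rewrite subrr mul0r. Qed.

Lemma b_nonmov a a' (al : R) : ~~ movable mu0 uR a a' -> b a a' al = 0.
Proof. by rewrite /movable negbK => /eqP; rewrite /b_alpha => ->; rewrite mulr0. Qed.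

Lemma bJ_nonmov a a' (lo hi : R) : ~~ movable mu0 uR a a' -> bJ a a' lo hi = 0.
Proof. by move=> h; rewrite /b_J !b_nonmov // maxxx. Qed.

Lemma bE a a' (al : R) : al != 0 -> b a a' al = du a a' mu0 - du a a' mu0 / al.
Proof. by move=> h; rewrite /b_alpha; field. Qed.

Lemma bJ_ge a a' (lo al hi : R) : 0 < lo -> lo <= al -> al <= hi -> b a a' al <= bJ a a' lo hi.
Proof.
move=> l0 la ah.
have a0 : 0 < al by apply: lt_le_trans la.
have h0 : 0 < hi by apply: lt_le_trans ah.
rewrite /b_J le_max !bE ?gt_eqF //.
set d := du a a' mu0.
case: (lerP 0 d) => d0.
  apply/orP; right; rewrite lerD2l lerN2.
  apply: ler_pM => //; first by rewrite invr_ge0 ltW.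
  by rewrite lef_pV2 ?posrE.
apply/orP; left; rewrite lerD2l lerN2.
have h : (-d) * al^-1 <= (-d) * lo^-1.
  apply: ler_pM => //; first by rewrite oppr_ge0 ltW.
    by rewrite invr_ge0 ltW.
  by rewrite lef_pV2 ?posrE.
by rewrite !mulNr lerN2 in h.
Qed.

Lemma b_close_pt a a' (al x e D : R) : 0 < al -> 0 <= e -> al <= 2 * x -> `|x - al| <= e ->
  `|du a a' mu0| <= D ->
  b a a' x <= b a a' al + e * (2 * D / al ^+ 2).
Proof.
move=> a0 e0 ax xe dD.
have x0 : 0 < x by lra.
rewrite !bE ?gt_eqF //.
set d := du a a' mu0.
set ia := al^-1.
have iaa : ia * al = 1 by rewrite mulVf ?gt_eqF.
have ia0 : 0 < ia by rewrite invr_gt0.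
set ix := x^-1.
have ixx : ix * x = 1 by rewrite mulVf ?gt_eqF.
have -> : 2 * D / al ^+ 2 = 2 * D * ia * ia by rewrite /ia expr2 invfM mulrA.
have key : d * ia - d * ix = d * (x - al) * ia * ix.
  have -> : d * (x - al) * ia * ix = d * ia * (ix * x) - d * ix * (ia * al) by ring.
  by rewrite ixx iaa !mulr1.
suff : d * ia - d * ix <= e * (2 * D * ia * ia) by lra.
rewrite key.
have hd : d * (x - al) <= D * e.
  apply: le_trans (ler_norm _) _; rewrite normrM.
  by apply: ler_pM => //.
have ix0 : 0 < ix by rewrite invr_gt0.
have h2 : ix <= 2 * ia.
  have p : 0 <= ix * ia * (2 * x - al) by apply: mulr_ge0; [apply: mulr_ge0; apply: ltW|lra].
  have e1 : ix * ia * (2 * x - al) = 2 * ia * (ix * x) - ix * (ia * al) by ring.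
  rewrite e1 ixx iaa in p; lra.
have D0 : 0 <= D by apply: le_trans dD.
have h3 : d * (x - al) * (ia * ix) <= D * e * (ia * ix).
  by apply: ler_wpM2r => //; apply: mulr_ge0; apply: ltW.
have h4 : (D * e * ia) * ix <= (D * e * ia) * (2 * ia).
  by apply: ler_wpM2l => //; apply: mulr_ge0; [apply: mulr_ge0|apply: ltW].
rewrite !mulrA in h3.
have -> : e * (2 * D * ia * ia) = (D * e * ia) * (2 * ia) by ring.
apply: le_trans h3 _; exact: h4.
Qed.

End Model.

Section Model2.
Context {R : realType} {Omega A : finType} (mu0 : Omega -> R) (uS uR : A -> Omega -> R).

Local Notation du := (du uR).
Local Notation b := (b_alpha mu0 uR).
Local Notation bJ := (b_J mu0 uR).

Lemma bJ_close a a' (al lo hi e D : R) : 0 < al -> 0 <= e -> 2 * e <= al ->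
  lo <= al -> al <= hi -> hi - lo <= e -> `|du a a' mu0| <= D ->
  bJ a a' lo hi <= b a a' al + e * (2 * D / al ^+ 2).
Proof.
move=> a0 e0 ea la ah he dD.
rewrite /b_J ge_max; apply/andP; split; apply: b_close_pt => //; try lra.
  by rewrite ler_norml; apply/andP; split; lra.
by rewrite ler_norml; apply/andP; split; lra.
Qed.

Lemma EuR_diff a a' q : EuR uR a q - EuR uR a' q = du a a' q.
Proof. by rewrite /EuR /Defs.du -sumrB; apply: eq_bigr => w _; ring. Qed.

Lemma mix_pos (al d x : R) : 0 < al ->
  (0 < (1 - al) * d + al * x) = ((al - 1) / al * d < x).
Proof.
move=> a0.
have -> : (1 - al) * d + al * x = al * (x - (al - 1) / al * d) by field; rewrite gt_eqF.
by rewrite pmulr_rgt0 // subr_gt0.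
Qed.

Lemma du_mix a a' (al : R) nu :
  du a a' (fun w => (1 - al) * mu0 w + al * nu w) = (1 - al) * du a a' mu0 + al * du a a' nu.
Proof. exact: du_comb. Qed.

Lemma relevant_strict (al : R) a : 0 < al -> relevant mu0 uR al a ->
  exists nu, belief nu /\ forall a', a' != a -> b a a' al < du a a' nu.
Proof.
move=> a0 [nu [bn H]]; exists nu; split => // a' ha.
have := H a' ha; rewrite -subr_gt0 EuR_diff du_mix mix_pos //.
Qed.

Lemma strict_relevant (al : R) a nu : 0 < al -> belief nu ->
  (forall a', a' != a -> b a a' al < du a a' nu) -> relevant mu0 uR al a.
Proof.
move=> a0 bn H; exists nu; split => // a' ha.
by rewrite -subr_gt0 EuR_diff du_mix mix_pos //; apply: H.
Qed.

Lemma intIC_relevant (lo al hi : R) a nu : 0 < lo -> lo <= al -> al <= hi ->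
  intIC_J mu0 uR a lo hi nu -> relevant mu0 uR al a.
Proof.
move=> l0 la ah [bn H]; apply: (@strict_relevant al a nu) => //; first exact: lt_le_trans la.
by move=> a' ha; apply: le_lt_trans (H a' ha); apply: bJ_ge.
Qed.

Lemma regionJ_alpha (lo al hi : R) a nu : 0 < lo -> lo <= al -> al <= hi ->
  region_J mu0 uR a lo hi nu -> region_alpha mu0 uR a al nu.
Proof.
move=> l0 la ah [bn H]; split => // a' ha.
by apply: le_trans (H a' ha); apply: bJ_ge.
Qed.

Lemma isafe_tb (lo al hi : R) tau : 0 < lo -> lo <= al -> al <= hi ->
  interval_safe_feasible mu0 uR lo hi tau -> true_bias_feasible mu0 uR al tau.
Proof.
move=> l0 la ah [sc H]; split => // t ht.
have [rg [nu hn]] := H t ht; split.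
  exact: intIC_relevant hn.
exact: regionJ_alpha rg.
Qed.

End Model2.

Section Vertex.
Context {R : realType} {Omega A : finType} (mu0 : Omega -> R) (uS uR : A -> Omega -> R).

Local Notation du := (du uR).
Local Notation b := (b_alpha mu0 uR).
Local Notation bJ := (b_J mu0 uR).

Lemma vertex_unique a (lo hi : R) nu nu' :
  is_vertex (region_J mu0 uR a lo hi) nu ->
  (forall a', a' != a -> movable mu0 uR a a' -> bJ a a' lo hi < du a a' nu) ->
  \sum_w nu' w = 1 ->
  (forall w, nu w = 0 -> nu' w = 0) ->
  (forall a', a' != a -> ~~ movable mu0 uR a a' -> du a a' nu = 0 -> du a a' nu' = 0) ->
  forall w, nu' w = nu w.
Proof.
move=> [[[bn0 bn1] Hreg] Hv] Hmov s1 H0 Hnm.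
pose P (i : Omega + A) (s : R) := match i with
  | inl w => 0 <= nu w + s * (nu' w - nu w) /\ 0 <= nu w + (- s) * (nu' w - nu w)
  | inr a' => a' != a -> bJ a a' lo hi <= du a a' nu + s * (du a a' nu' - du a a' nu) /\
                         bJ a a' lo hi <= du a a' nu + (- s) * (du a a' nu' - du a a' nu)
  end.
have HP : forall i, exists2 e : R, 0 < e & forall s : R, 0 < s -> s <= e -> P i s.
  case=> [w|a'].
    case: (eqVneq (nu w) 0) => h.
      by exists 1 => // s _ _; rewrite /P h (H0 w h) subrr !mulr0 addr0; split.
    have nw : 0 < nu w by rewrite lt_def h bn0.
    have [e e0 He] := small_lin2 _ (nu' w - nu w) nw.
    exists e => // s s0 se; have [h1 h2] := He s s0 se; rewrite /P mulNr; split; lra.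
  case: (eqVneq a' a) => ha.
    by exists 1 => // s _ _; rewrite /P ha eqxx.
  case hm: (movable mu0 uR a a').
    have r0 : 0 < du a a' nu - bJ a a' lo hi by rewrite subr_gt0; apply: Hmov.
    have [e e0 He] := small_lin2 _ (du a a' nu' - du a a' nu) r0.
    exists e => // s s0 se _; have [h1 h2] := He s s0 se; rewrite mulNr; split; lra.
  have nm : ~~ movable mu0 uR a a' by rewrite hm.
  have hr := Hreg a' ha; rewrite bJ_nonmov // in hr.
  case: (eqVneq (du a a' nu) 0) => hd.
    by exists 1 => // s _ _ _; rewrite bJ_nonmov // hd (Hnm a' ha nm hd) subrr !mulr0 addr0.
  have r0 : 0 < du a a' nu by rewrite lt_def hd hr.
  have [e e0 He] := small_lin2 _ (du a a' nu' - du a a' nu) r0.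
  exists e => // s s0 se _; have [h1 h2] := He s s0 se; rewrite bJ_nonmov // mulNr; split; lra.
have [e e0 He] := fin_small _ _ HP.
pose x := fun w => nu w + e * (nu' w - nu w).
pose y := fun w => nu w + (- e) * (nu' w - nu w).
have ee : 0 < e <= e by rewrite e0 lexx.
have Rx : region_J mu0 uR a lo hi x.
  split; first split.
  - by move=> w; have [h _] := He (inl w) e e0 (lexx e).
  - by rewrite /x sum_aff s1 bn1 subrr mulr0 addr0.
  - move=> a' ha; rewrite /x du_aff; by have [h _] := He (inr a') e e0 (lexx e) ha.
have Ry : region_J mu0 uR a lo hi y.
  split; first split.
  - by move=> w; have [_ h] := He (inl w) e e0 (lexx e).
  - by rewrite /y sum_aff s1 bn1 subrr mulr0 addr0.
  - move=> a' ha; rewrite /y du_aff; by have [_ h] := He (inr a') e e0 (lexx e) ha.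
have t01 : ((0 : R) < 2^-1) && (2^-1 < (1:R)).
  apply/andP; split; first by rewrite invr_gt0.
  by rewrite invf_lt1 // ltr1n.
have := Hv x y (2^-1) Rx Ry t01.
have Hmix : forall w, nu w = 2^-1 * x w + (1 - 2^-1) * y w.
  by move=> w; rewrite /x /y; field.
move=> /(_ Hmix) Hxy w.
have := Hxy w; rewrite /x /y => h.
have : e * (nu' w - nu w) = 0 by rewrite mulNr in h; lra.
move/eqP; rewrite mulf_eq0 (gt_eqF e0) /= subr_eq0 => /eqP; done.
Qed.

End Vertex.

Section Sums.
Context {R : realType}.

Lemma ler_sum_In (T : Type) (r : seq T) (F G : T -> R) :
  (forall t, List.In t r -> F t <= G t) -> \sum_(t <- r) F t <= \sum_(t <- r) G t.
Proof.
elim: r => [|x r IH] H; first by rewrite !big_nil.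
rewrite !big_cons; apply: lerD; first by apply: H; left.
by apply: IH => t ht; apply: H; right.
Qed.

Lemma eq_sum_In (T : Type) (r : seq T) (F G : T -> R) :
  (forall t, List.In t r -> F t = G t) -> \sum_(t <- r) F t = \sum_(t <- r) G t.
Proof.
elim: r => [|x r IH] H; first by rewrite !big_nil.
rewrite !big_cons (H x); last by left.
by rewrite IH // => t ht; apply: H; right.
Qed.

Lemma single_le_sum (I : finType) (F : I -> R) i :
  (forall j, 0 <= F j) -> F i <= \sum_j F j.
Proof. by move=> H; rewrite (bigD1 i) //= lerDl sumr_ge0. Qed.

End Sums.
Arguments single_le_sum {R I} F i.

Section Bounds.
Context {R : realType} {Omega A : finType} (mu0 : Omega -> R) (uS uR : A -> Omega -> R).

Definition Bnd : R := \sum_a \sum_w `|uS a w|.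

Lemma Bnd_ge0 : 0 <= Bnd.
Proof. by apply: sumr_ge0 => a _; apply: sumr_ge0. Qed.

Lemma uS_le a w : `|uS a w| <= Bnd.
Proof.
have h1 : `|uS a w| <= \sum_(v : Omega) `|uS a v| by apply: (single_le_sum (fun w => `|uS a w|) w).
have h2 : \sum_(v : Omega) `|uS a v| <= Bnd by apply: (single_le_sum (fun a => \sum_w `|uS a w|) a) => j; apply: sumr_ge0.
exact: le_trans h1 h2.
Qed.

Lemma belief_bound (nu : Omega -> R) a : belief nu -> `|\sum_w nu w * uS a w| <= Bnd.
Proof.
move=> [n0 n1]; apply: le_trans (ler_norm_sum _ _ _) _.
apply: (@le_trans _ _ (\sum_w nu w * Bnd)).
  apply: ler_sum => w _; rewrite normrM ger0_norm //; apply: ler_wpM2l => //; exact: uS_le.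
by rewrite -mulr_suml n1 mul1r.
Qed.

Lemma value_bound (tau : scheme R Omega A) :
  is_scheme mu0 tau -> (forall t, List.In t tau -> belief (atom_nu t)) ->
  `|value uS tau| <= Bnd.
Proof.
move=> [p0 [p1 _]] H; apply: le_trans (ler_norm_sum _ _ _) _.
apply: (@le_trans _ _ (\sum_(t <- tau) atom_p t * Bnd)).
  apply: ler_sum_In => t ht; rewrite normrM ger0_norm; last exact: p0.
  apply: ler_wpM2l; first exact: p0.
  exact: belief_bound (H t ht).
by rewrite -mulr_suml p1 mul1r.
Qed.

End Bounds.

Section Approx.
Context {R : realType} {Omega A : finType} (mu0 : Omega -> R) (uS uR : A -> Omega -> R).

Local Notation du := (du uR).
Local Notation b := (b_alpha mu0 uR).
Local Notation bJ := (b_J mu0 uR).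

Definition star (al : R) (a : A) : Omega -> R :=
  match pselect (exists nu, belief nu /\ forall a', a' != a -> b a a' al < du a a' nu) with
  | left h => proj1_sig (cid h)
  | right _ => mu0
  end.

Lemma star_spec (al : R) a : 0 < al -> relevant mu0 uR al a ->
  belief (star al a) /\ forall a', a' != a -> b a a' al < du a a' (star al a).
Proof.
move=> a0 hr; rewrite /star; case: pselect => [h|h].
  exact: (proj2_sig (cid h)).
by exfalso; apply: h; apply: relevant_strict.
Qed.

Definition DD : R := \sum_a \sum_a' `|du a a' mu0|.

Lemma du_le_DD a a' : `|du a a' mu0| <= DD.
Proof.
have h1 : `|du a a' mu0| <= \sum_(v : A) `|du a v mu0| by apply: (single_le_sum (fun v => `|du a v mu0|) a').
have h2 : \sum_(v : A) `|du a v mu0| <= DD by apply: (single_le_sum (fun a => \sum_v `|du a v mu0|) a) => j; apply: sumr_ge0.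
exact: le_trans h1 h2.
Qed.

Lemma DD_ge0 : 0 <= DD.
Proof. by apply: sumr_ge0 => a _; apply: sumr_ge0. Qed.

Lemma approx (al : R) (a0 : A) : 0 < al ->
  full_support_prior mu0 ->
  (forall a, a != a0 -> EuR uR a mu0 < EuR uR a0 mu0) ->
  forall sg, true_bias_feasible mu0 uR al sg -> forall eta : R, 0 < eta ->
  exists2 ep : R, 0 < ep & forall lo hi : R, 0 < lo -> lo <= al -> al <= hi -> hi - lo <= ep ->
    exists sg', interval_safe_feasible mu0 uR lo hi sg' /\ value uS sg - eta <= value uS sg'.
Proof.
move=> al0 [mu0pos mu01] hdef sg [[sp0 [sp1 sbay]] sH] eta eta0.
have dpos : forall a', a' != a0 -> 0 < du a0 a' mu0.
  by move=> a' h; rewrite -EuR_diff subr_gt0; apply: hdef.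
have bd0 : forall a', a' != a0 -> 0 < du a0 a' mu0 - b a0 a' al.
  move=> a' h; rewrite bE ?gt_eqF //.
  have -> : du a0 a' mu0 - (du a0 a' mu0 - du a0 a' mu0 / al) = du a0 a' mu0 / al by ring.
  by apply: divr_gt0 => //; apply: dpos.
have [dl dl0 Hdl] : exists2 dl : R, 0 < dl & forall (i : A * A) (s : R), 0 < s -> s <= dl ->
   (relevant mu0 uR al i.1 -> i.2 != i.1 -> b i.1 i.2 al + s <= du i.1 i.2 (star al i.1)) /\
   (i.1 = a0 -> i.2 != a0 -> b a0 i.2 al + 2 * s <= du a0 i.2 mu0).
  apply: fin_small => -[a a'] /=.
  have [e1 e10 H1] : exists2 e : R, 0 < e & forall s : R, 0 < s -> s <= e ->
      relevant mu0 uR al a -> a' != a -> b a a' al + s <= du a a' (star al a).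
    case: (pselect (relevant mu0 uR al a /\ a' != a)) => [[hr ha]|hn].
      have [_ hs] := star_spec _ _ al0 hr.
      exists (du a a' (star al a) - b a a' al); first by rewrite subr_gt0; apply: hs.
      move=> s _ se _ _; lra.
    by exists 1 => // s _ _ hr ha; exfalso; apply: hn.
  have [e2 e20 H2] : exists2 e : R, 0 < e & forall s : R, 0 < s -> s <= e ->
      a = a0 -> a' != a0 -> b a0 a' al + 2 * s <= du a0 a' mu0.
    case: (eqVneq a a0) => [->|hne]; last by exists 1 => // s _ _ h; rewrite h eqxx in hne.
    case: (eqVneq a' a0) => [->|hne']; first by exists 1 => // s _ _ _; rewrite eqxx.
    have := bd0 a' hne' => hb.
    exists ((du a0 a' mu0 - b a0 a' al) / 2); first by apply: divr_gt0.
    move=> s _ se _ _; lra.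
  exists (Num.min e1 e2); first by rewrite lt_min e10 e20.
  move=> s s0; rewrite le_min => /andP[h1 h2]; split.
    exact: H1.
  exact: H2.
pose ms := fun w => \sum_(t <- sg) atom_p t * star al (atom_a t) w.
have ms1 : \sum_w ms w = 1.
  rewrite /ms exchange_big /= -sp1; apply: eq_sum_In => t ht.
  rewrite -mulr_sumr; have [[_ s1] _] := star_spec _ _ al0 (sH t ht).1.
  by rewrite s1 mulr1.
have [k0 k00 Hk] : exists2 k : R, 0 < k & forall (i : Omega + A) (s : R), 0 < s -> s <= k ->
  match i with
  | inl w => is_true (0 <= mu0 w + s * (mu0 w - ms w))
  | inr a' => a' != a0 -> b a0 a' al + dl <= du a0 a' mu0 + s * (du a0 a' mu0 - du a0 a' ms)
  end.
  apply: fin_small => -[w|a'].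
    have [e e0 He] := small_lin2 (mu0 w) (mu0 w - ms w) (mu0pos w).
    by exists e => // s s0 se; have [h1 _] := He s s0 se; lra.
  case: (eqVneq a' a0) => [->|hne]; first by exists 1 => // s _ _; rewrite eqxx.
  have r0 : 0 < du a0 a' mu0 - b a0 a' al - dl.
    have [_ h] := Hdl (a0, a') dl dl0 (lexx dl); have := h erefl hne => /=; lra.
  have [e e0 He] := small_lin2 _ (du a0 a' mu0 - du a0 a' ms) r0.
  by exists e => // s s0 se _; have [h1 _] := He s s0 se; lra.
pose kap := Num.min k0 1.
have kap0 : 0 < kap by rewrite lt_min k00 ltr01.
have kap1 : kap <= 1 by rewrite ge_min lexx orbT.
have kapk : kap <= k0 by rewrite ge_min lexx.
clearbody kap.
have B0 := Bnd_ge0 uS.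
pose mu := Num.min (2^-1) (eta / (4 * Bnd uS + 4)).
have mup : 0 < mu.
  rewrite lt_min invr_gt0 ltr0n /=; apply: divr_gt0 => //; lra.
have muh : mu <= 2^-1 by rewrite ge_min lexx.
have mue' : mu <= eta / (4 * Bnd uS + 4) by rewrite ge_min lexx orbT.
clearbody mu.
have mue : (4 * Bnd uS + 4) * mu <= eta.
  by move: mue'; rewrite ler_pdivlMr //; lra.
have h2 : (2^-1 : R) < 1 by rewrite invf_lt1 // ltr1n.
pose lam := 1 - mu.
have lamE : lam = 1 - mu by [].
clearbody lam.
pose ep := kap * mu.
have epE : ep = kap * mu by [].
clearbody ep.
pose sz := lam * kap.
have szE : sz = lam * kap by [].
clearbody sz.
have ep0 : 0 < ep by rewrite epE; apply: mulr_gt0.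
have epmu : ep <= mu by rewrite epE -{2}(mul1r mu); apply: ler_wpM2r => //; apply: ltW.
have ep1 : ep <= 1 by lra.
have lam0 : 0 < lam by rewrite lamE; lra.
have lam1 : lam <= 1 by rewrite lamE; lra.
have sz0 : 0 < sz by rewrite szE; apply: mulr_gt0.
have szk : sz <= kap by rewrite szE -{2}(mul1r kap); apply: ler_wpM2r => //; apply: ltW.
have szk0 : sz <= k0 by apply: le_trans szk kapk.
have lamep : lam * ep <= mu.
  rewrite epE mulrA -{2}(mul1r mu); apply: ler_wpM2r; first exact: ltW.
  by rewrite -(mul1r 1); apply: ler_pM => //; apply: ltW.
pose K := 2 * DD / al ^+ 2.
have K0 : 0 <= K by apply: divr_ge0; [apply: mulr_ge0 => //; apply: DD_ge0 | apply: exprn_ge0; apply: ltW].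
have K10 : 0 < K + 1 by lra.
pose epi := Num.min (al / 2) (ep * dl / (K + 1)).
have epi0 : 0 < epi by rewrite lt_min; apply/andP; split; apply: divr_gt0 => //; apply: mulr_gt0.
have epiK : epi * K < ep * dl.
  apply: (@le_lt_trans _ _ (ep * dl / (K + 1) * K)).
    by apply: ler_wpM2r => //; rewrite ge_min lexx orbT.
  rewrite mulrAC ltr_pdivrMr // ltr_pM2l; first lra.
  by apply: mulr_gt0.
have epial : 2 * epi <= al.
  have : epi <= al / 2 by rewrite ge_min lexx.
  by rewrite ler_pdivlMr //; lra.
clearbody epi.
exists epi => // lo hi lo0 la ah he.
have hb : forall a a', bJ a a' lo hi < b a a' al + ep * dl.
  move=> a a'.
  have := @bJ_close _ _ _ mu0 uR a a' al lo hi epi DD al0 (ltW epi0) epial la ah he (du_le_DD a a').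
  rewrite -/K => h; apply: le_lt_trans h _; lra.
pose nu' := fun (t : atom R Omega A) (w : Omega) => (1 - ep) * atom_nu t w + ep * star al (atom_a t) w.
pose f := fun t : atom R Omega A => Atom (lam * atom_p t) (nu' t) (atom_a t).
pose z := fun w => mu0 w + sz * (mu0 w - ms w).
have epdl : ep * dl <= dl by rewrite -{2}(mul1r dl); apply: ler_wpM2r => //; apply: ltW.
have zb : belief z.
  split.
    by move=> w; exact: (Hk (inl w) sz sz0 szk0).
  by rewrite /z sum_gen mu01 ms1 subrr mulr0 addr0.
have zI : intIC_J mu0 uR a0 lo hi z.
  split => // a' ha.
  rewrite /z du_gen; have h := Hk (inr a') sz sz0 szk0 ha.
  have := hb a0 a'; lra.
have nI : forall t, List.In t sg -> intIC_J mu0 uR (atom_a t) lo hi (nu' t).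
  move=> t ht; have [hr [[bn0 bn1] hreg]] := sH t ht.
  have [[s0 s1] hs] := star_spec _ _ al0 hr.
  split; first split.
  - move=> w; rewrite /nu'; apply: addr_ge0; apply: mulr_ge0 => //; lra.
  - by rewrite /nu' sum_comb bn1 s1; ring.
  - move=> a' ha; rewrite /nu' du_comb.
    have h1 := hreg a' ha.
    have [hh2 _] := Hdl (atom_a t, a') dl dl0 (lexx dl).
    have h2' := hh2 hr ha.
    have h3 := hb (atom_a t) a'.
    have h4 : (1 - ep) * b (atom_a t) a' al <= (1 - ep) * du (atom_a t) a' (atom_nu t).
      by apply: ler_wpM2l => //; lra.
    have h5 : ep * (b (atom_a t) a' al + dl) <= ep * du (atom_a t) a' (star al (atom_a t)).
      by apply: ler_wpM2l => //; apply: ltW.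
    lra.
exists (map f sg ++ [:: Atom mu z a0]).
split.
  split.
    split.
      move=> t /List.in_app_iff [/List.in_map_iff [t0 [<- ht0]] | [<- | []]] /=.
        by apply: mulr_ge0; [apply: ltW | apply: sp0].
      exact: ltW.
    split.
      by rewrite big_cat big_map /= big_cons big_nil addr0 -mulr_sumr sp1 mulr1 lamE /=; ring.
    move=> w; rewrite big_cat big_map /= big_cons big_nil addr0 /=.
    have -> : \sum_(t <- sg) lam * atom_p t * nu' t w = lam * ((1 - ep) * mu0 w + ep * ms w).
      rewrite -sbay /ms !mulr_sumr -big_split /= mulr_sumr; apply: eq_bigr => t _; rewrite /nu'; ring.
    rewrite /z szE epE lamE; ring.
  move=> t /List.in_app_iff [/List.in_map_iff [t0 [<- ht0]] | [<- | []]] /=.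
    have h := nI t0 ht0; split; last by exists (nu' t0).
    by case: h => hb' hh; split => // a' ha; apply: ltW; apply: hh.
  split; last by exists z.
  by case: zI => hb' hh; split => // a' ha; apply: ltW; apply: hh.
have sc : is_scheme mu0 sg by split => //; split.
have hV : `|value uS sg| <= Bnd uS.
  apply: value_bound => // t ht; have [_ [hb' _]] := sH t ht; exact: hb'.
have hz : `|\sum_w z w * uS a0 w| <= Bnd uS by apply: belief_bound.
rewrite /value big_cat big_map /= big_cons big_nil addr0 /=.
rewrite /value in hV.
set V := \sum_(t <- sg) atom_p t * \sum_w atom_nu t w * uS (atom_a t) w in hV *.
set Z := \sum_w z w * uS a0 w in hz *.
have hsum : lam * (1 - ep) * V - lam * ep * Bnd uS <=
    \sum_(t <- sg) lam * atom_p t * \sum_w nu' t w * uS (atom_a t) w.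
  have -> : lam * (1 - ep) * V - lam * ep * Bnd uS = \sum_(t <- sg)
      (lam * (1 - ep) * (atom_p t * \sum_w atom_nu t w * uS (atom_a t) w) - lam * ep * Bnd uS * atom_p t).
    by rewrite sumrB -!mulr_sumr sp1 mulr1.
  apply: ler_sum_In => t ht.
  have [hr [[bn0 bn1] _]] := sH t ht; have [[s0 s1] _] := star_spec _ _ al0 hr.
  have hY : `|\sum_w star al (atom_a t) w * uS (atom_a t) w| <= Bnd uS.
    by apply: belief_bound; split.
  have -> : \sum_w nu' t w * uS (atom_a t) w = (1 - ep) * \sum_w atom_nu t w * uS (atom_a t) w
       + ep * \sum_w star al (atom_a t) w * uS (atom_a t) w.
    rewrite /nu' !mulr_sumr -big_split /=; apply: eq_bigr => w _; ring.
  set X := \sum_w atom_nu t w * uS (atom_a t) w.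
  set Y := \sum_w star al (atom_a t) w * uS (atom_a t) w in hY *.
  have hY' : 0 <= Y + Bnd uS by move: hY; rewrite ler_norml => /andP [h _]; lra.
  have hp := sp0 t ht.
  have : 0 <= lam * atom_p t * ep * (Y + Bnd uS).
    by apply: mulr_ge0 => //; apply: mulr_ge0; [apply: mulr_ge0 => //; apply: ltW | apply: ltW].
  lra.
have hZ : - Bnd uS <= Z by move: hz; rewrite ler_norml => /andP [h _].
have hmu : mu * (- Bnd uS) <= mu * Z by apply: ler_wpM2l => //; apply: ltW.
have hVB : V <= Bnd uS by move: hV; rewrite ler_norml => /andP [_ h].
have c0 : 0 <= mu + lam * ep by apply: addr_ge0; [apply: ltW | apply: mulr_ge0; apply: ltW].
have hc : (mu + lam * ep) * V <= (mu + lam * ep) * Bnd uS by apply: ler_wpM2l.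
have hlB : lam * ep * Bnd uS <= mu * Bnd uS by apply: ler_wpM2r.
clear -hsum hmu hc hlB mue lamE mup.
subst lam.
lra.
Qed.

End Approx.

Section Main.
Context {R : realType} {Omega A : finType} (mu0 : Omega -> R) (uS uR : A -> Omega -> R) (al : R).

Local Notation du := (du uR).
Local Notation b := (b_alpha mu0 uR).
Local Notation bJ := (b_J mu0 uR).

Definition Ix := (A * {set (Omega + A)})%type.

Definition actset (a : A) (nu : Omega -> R) : {set (Omega + A)} :=
  [set i | match i with
           | inl w => nu w == 0
           | inr a' => [&& a' != a, ~~ movable mu0 uR a a' & du a a' nu == 0]
           end].

Definition tight (a : A) (S : {set (Omega + A)}) (nu' : Omega -> R) : Prop :=
  \sum_w nu' w = 1 /\ (forall w, inl w \in S -> nu' w = 0) /\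
  (forall a', inr a' \in S -> du a a' nu' = 0).

Definition pt (i : Ix) : Omega -> R :=
  match pselect (exists nu', tight i.1 i.2 nu') with
  | left h => proj1_sig (cid h)
  | right _ => mu0
  end.

Lemma pt_eq a (lo hi : R) nu : is_vertex (region_J mu0 uR a lo hi) nu ->
  (forall a', a' != a -> movable mu0 uR a a' -> bJ a a' lo hi < du a a' nu) ->
  pt (a, actset a nu) = nu.
Proof.
move=> hv hm.
have hx : exists nu', tight a (actset a nu) nu'.
  exists nu; split; first by case: hv => [[[_ h] _] _].
  split.
    by move=> w; rewrite inE => /eqP.
  by move=> a'; rewrite inE => /and3P [_ _ /eqP].
rewrite /pt /=; case: pselect => [h|hn]; last by exfalso; apply: hn.
case: (proj2_sig (cid h)) => s1 [h0 h1].
apply: funext => w; apply: (@vertex_unique _ _ _ mu0 uR a lo hi nu _ hv hm s1).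
  by move=> v hv0; apply: h0; rewrite inE hv0.
by move=> a' ha hn hd; apply: h1; rewrite inE ha hn hd eqxx.
Qed.

Definition valid (i : Ix) : Prop :=
  relevant mu0 uR al i.1 /\ region_alpha mu0 uR i.1 al (pt i) /\
  (forall a', a' != i.1 -> movable mu0 uR i.1 a' -> b i.1 a' al < du i.1 a' (pt i)).

Definition valI (i : Ix) : R := \sum_w pt i w * uS i.1 w.

End Main.

Section Sums2.
Context {R : realType}.

Lemma sum_filter0 (T : Type) (r : seq T) (P : pred T) (F : T -> R) :
  (forall t, List.In t r -> P t -> False) -> \sum_(t <- r | P t) F t = 0.
Proof.
elim: r => [|x r IH] H; first by rewrite big_nil.
rewrite big_cons; case: ifP => hp.
  by exfalso; apply: (H x); [left|].
by apply: IH => t ht; apply: H; right.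
Qed.

Lemma sum_sub_le (T : Type) (r : seq T) (P : pred T) (F : T -> R) :
  (forall t, List.In t r -> 0 <= F t) -> \sum_(t <- r | P t) F t <= \sum_(t <- r) F t.
Proof.
move=> H; rewrite big_mkcond /=; apply: ler_sum_In => t ht.
by case: ifP => _ //; apply: H.
Qed.

Lemma sum_ge0_In (T : Type) (r : seq T) (P : pred T) (F : T -> R) :
  (forall t, List.In t r -> 0 <= F t) -> 0 <= \sum_(t <- r | P t) F t.
Proof.
move=> H; rewrite big_mkcond /=.
have h := @ler_sum_In R T r (fun _ => 0) (fun t => if P t then F t else 0).
rewrite big1 // in h; apply: h => t ht.
by case: ifP => _ //; apply: H.
Qed.

Lemma regroup (T : Type) (I : finType) (r : seq T) (P : pred T) (g : T -> I) (F : T -> R) (X : I -> R) :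
  \sum_(i : I) (\sum_(t <- r | P t && (g t == i)) F t) * X i = \sum_(t <- r | P t) F t * X (g t).
Proof.
elim: r => [|x r IH].
  by rewrite big_nil big1 // => i _; rewrite big_nil mul0r.
rewrite big_cons -IH.
have -> : \sum_i (\sum_(t <- x :: r | P t && (g t == i)) F t) * X i =
   \sum_i ((if P x && (g x == i) then F x else 0) * X i) + \sum_i (\sum_(t <- r | P t && (g t == i)) F t) * X i.
  rewrite -big_split /=; apply: eq_bigr => i _; rewrite big_cons.
  by case: ifP => _; rewrite ?mul0r ?add0r // mulrDl.
case: ifP => hp.
  congr (_ + _).
  rewrite (bigD1 (g x)) //= eqxx big1 ?addr0 // => i hi.
  by rewrite eq_sym (negbTE hi) mul0r.
by rewrite big1 ?add0r // => i _; rewrite /= mul0r.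
Qed.

Lemma In_map_filter (T U : Type) (f : T -> U) (P : pred T) (s : seq T) u :
  List.In u [seq f i | i <- s & P i] -> exists i, List.In i s /\ P i /\ u = f i.
Proof.
elim: s => [|x s IH] //=.
case: ifP => hp /=.
  case=> [<-|h]; first by exists x; split; [left|].
  by have [i [hi [pi ->]]] := IH h; exists i; split; [right|].
by move=> h; have [i [hi [pi ->]]] := IH h; exists i; split; [right|].
Qed.

End Sums2.

Section Topo.
Context {R : realType}.
Local Open Scope classical_set_scope.

Lemma sum_cont n (I : Type) (r : seq I) (F : I -> 'rV[R]_n -> R) :
  (forall i, continuous (F i)) -> continuous (fun m => \sum_(i <- r) F i m).
Proof.
move=> Fc; elim: r => [|i r IH].
  move=> m; under eq_fun do rewrite big_nil. exact: cst_continuous.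
move=> m; under eq_fun do rewrite big_cons.
apply: (@continuousD R R^o 'rV[R]_n (F i) (fun m => \sum_(j <- r) F j m)); [exact: Fc|exact: IH].
Qed.

Lemma lin_cont n (i : 'I_n) (c : R) : continuous (fun m : 'rV[R]_n => m ord0 i * c).
Proof.
move=> m. apply: (@continuousM R 'rV[R]_n); [exact: coord_continuous| exact: cst_continuous].
Qed.

Lemma abs_cont n (F : 'rV[R]_n -> R) : continuous F -> continuous (fun m => `|F m|).
Proof. move=> Fc m. apply: continuous_comp; [exact: Fc| exact: (@norm_continuous R R^o)]. Qed.

Lemma subc_cont n (F : 'rV[R]_n -> R) (c : R) : continuous F -> continuous (fun m => F m - c).
Proof.
move=> Fc m; apply: (@continuousD R R^o 'rV[R]_n F (fun _ => - c)); [exact: Fc|exact: cst_continuous].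
Qed.

Lemma csub_cont n (F : 'rV[R]_n -> R) (c : R) : continuous F -> continuous (fun m => c - F m).
Proof.
move=> Fc m; apply: (@continuousD R R^o 'rV[R]_n (fun _ => c) (fun m => - F m)); first exact: cst_continuous.
by apply: (@continuousN R R^o 'rV[R]_n F); exact: Fc.
Qed.

Lemma add_cont n (F G : 'rV[R]_n -> R) : continuous F -> continuous G -> continuous (fun m => F m + G m).
Proof.
by move=> Fc Gc m; apply: (@continuousD R R^o 'rV[R]_n F G); [exact: Fc|exact: Gc].
Qed.

Lemma evt_min n (V : 'I_n -> Prop) (h : 'rV[R]_n -> R) : continuous h ->
  exists2 m0 : 'rV[R]_n,
    (forall j, V j -> 0 <= m0 ord0 j <= 1) /\ (forall j, ~ V j -> m0 ord0 j = 0) &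
    forall m : 'rV[R]_n, (forall j, V j -> 0 <= m ord0 j <= 1) -> (forall j, ~ V j -> m ord0 j = 0) ->
      h m0 <= h m.
Proof.
move=> hc.
pose As (j : 'I_n) : set R := if pselect (V j) then `[0, 1]%classic else [set 0].
pose K := [set v : 'rV[R]_n | forall j, As j (v ord0 j)].
have cK : compact K.
  apply: rV_compact => j; rewrite /As; case: pselect => hv.
    exact: segment_compact.
  exact: compact_set1.
have K0 : K !=set0.
  exists 0 => j; rewrite /As mxE; case: pselect => hv //=.
  by rewrite in_itv /= lexx ler01.
have [m0 m0K Hm] := compact_EVT_min K0 cK (continuous_subspaceT hc).
have toK : forall m : 'rV[R]_n, (forall j, V j -> 0 <= m ord0 j <= 1) -> (forall j, ~ V j -> m ord0 j = 0) -> m \in K.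
  move=> m h1 h2; rewrite inE => j; rewrite /As; case: pselect => hv /=.
    by rewrite in_itv /=; apply: h1.
  exact: h2.
rewrite inE in m0K.
exists m0.
  split => j hj; move: (m0K j); rewrite /As; case: pselect => hv; try (by exfalso; auto); move=> hh.
    by move: hh; rewrite /= in_itv.
  by [].
by move=> m h1 h2; apply: Hm; apply: toK.
Qed.

End Topo.

Theorem proposition4p4 (R : realType) (Omega A : finType)
  (mu0 : Omega -> R) (uS uR : A -> Omega -> R) (alpha_star : R) :
  full_support_prior mu0 ->
  unique_default mu0 uR ->
  0 < alpha_star <= 1 ->
  (exists c eps : R, 0 < c /\ 0 < eps /\
     forall lo hi : R, 0 < lo -> lo <= alpha_star -> alpha_star <= hi ->
       hi <= 1 -> hi - lo <= eps ->
       forall tau : scheme R Omega A,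
         interval_safe_vertex_optimizer mu0 uS uR lo hi tau ->
         c <= P_info_J mu0 uR lo hi tau)
  \/
  (exists tau : scheme R Omega A,
     true_bias_optimal mu0 uS uR alpha_star tau /\
     P_info_alpha mu0 uR alpha_star tau = 0).
Proof.
move=> [mu0pos mu01] [a0 hdef] /andP [al0 al1].
set al := alpha_star.
have bmu0 : belief mu0 by split => // w; apply: ltW.
have dpos : forall a', a' != a0 -> b_alpha mu0 uR a0 a' al < du uR a0 a' mu0.
  move=> a' h; rewrite bE ?gt_eqF //.
  have : 0 < du uR a0 a' mu0 / al.
    by apply: divr_gt0 => //; rewrite -EuR_diff subr_gt0; apply: hdef.
  lra.
have hdef' : forall a, a != a0 -> EuR uR a mu0 < EuR uR a0 mu0 by [].
pose sg0 : scheme R Omega A := [:: Atom 1 mu0 a0].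
have sg0f : true_bias_feasible mu0 uR al sg0.
  split.
    split; first by move=> t [<-|[]] /=; exact: ler01.
    split; first by rewrite big_cons big_nil addr0.
    by move=> w; rewrite big_cons big_nil addr0 /= mul1r.
  move=> t [<-|[]] /=; split.
    exact: (strict_relevant mu0 uR al a0 mu0 al0 bmu0 dpos).
  split; first exact: bmu0.
  by move=> a' ha; apply: ltW; apply: dpos.
pose E : set R := fun v => exists sg, true_bias_feasible mu0 uR al sg /\ v = value uS sg.
have hsupE : has_sup E.
  split; first by exists (value uS sg0), sg0.
  exists (Bnd uS) => v [sg [hf ->]].
  have := value_bound mu0 uS _ hf.1 (fun t ht => ((hf.2 t ht).2).1).
  by rewrite ler_norml => /andP [_ h].
pose M := sup E.
have M_ub : forall sg, true_bias_feasible mu0 uR al sg -> value uS sg <= M.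
  by move=> sg hf; apply: sup_upper_bound => //; exists sg.
pose n := #|{: @Ix Omega A}|.
pose cm := fun (m : 'rV[R]_n) (i : @Ix Omega A) => m ord0 (enum_rank i).
pose h := fun m : 'rV[R]_n =>
  \sum_w `|\sum_i cm m i * pt mu0 uR i w - mu0 w| + `|M - \sum_i cm m i * valI mu0 uS uR i|.
have hcont : continuous h.
  apply: add_cont.
    apply: sum_cont => w; apply: abs_cont; apply: subc_cont; apply: sum_cont => i.
    exact: lin_cont.
  apply: abs_cont; apply: csub_cont; apply: sum_cont => i; exact: lin_cont.
have [m0 [m0v m0i] Hm] := evt_min n (fun j => valid mu0 uR al (enum_val j)) h hcont.
have m0v' : forall i, valid mu0 uR al i -> 0 <= cm m0 i <= 1.
  by move=> i hi; apply: m0v; rewrite enum_rankK.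
have m0i' : forall i, ~ valid mu0 uR al i -> cm m0 i = 0.
  by move=> i hi; apply: m0i; rewrite enum_rankK.
have h0 : forall m, 0 <= h m.
  move=> m; apply: addr_ge0 => //; apply: sumr_ge0 => w _ //.
have := h0 m0; rewrite le_eqVlt => /orP [/eqP hz | hpos].
  right.
  have hz' : h m0 = 0 by rewrite hz.
  have [hs ha] : \sum_w `|\sum_i cm m0 i * pt mu0 uR i w - mu0 w| = 0 /\
                 `|M - \sum_i cm m0 i * valI mu0 uS uR i| = 0.
    move: hz'; rewrite /h => /eqP; rewrite paddr_eq0 //; last by apply: sumr_ge0.
    by case/andP => /eqP -> /eqP ->.
  have hg : forall w, \sum_i cm m0 i * pt mu0 uR i w = mu0 w.
    move=> w; have := @psumr_eq0P _ _ _ _ (fun w _ => normr_ge0 _) hs w isT.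
    by move/normr0_eq0/eqP; rewrite subr_eq0 => /eqP.
  have hv : \sum_i cm m0 i * valI mu0 uS uR i = M.
    by move/normr0_eq0/eqP: ha; rewrite subr_eq0 => /eqP ->.
  have hfilt : forall Y : @Ix Omega A -> R,
      \sum_(i <- index_enum (@Ix Omega A) | `[< valid mu0 uR al i >]) cm m0 i * Y i = \sum_i cm m0 i * Y i.
    move=> Y; rewrite big_mkcond /=; apply: eq_bigr => i _.
    by case: asboolP => // hn; rewrite m0i' // mul0r.
  have hsum1 : \sum_i cm m0 i = 1.
    rewrite -mu01 -(eq_bigr _ (fun w _ => hg w)) exchange_big /=; apply: eq_bigr => i _.
    rewrite -mulr_sumr.
    case: (pselect (valid mu0 uR al i)) => hi.
      by case: hi => _ [[[_ ->] _] _]; rewrite mulr1.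
    by rewrite m0i' // !mul0r.
  pose tau := [seq Atom (cm m0 i) (pt mu0 uR i) i.1 | i <- index_enum (@Ix Omega A) & `[< valid mu0 uR al i >]].
  have hIn : forall t, List.In t tau -> exists i, valid mu0 uR al i /\ t = Atom (cm m0 i) (pt mu0 uR i) i.1.
    move=> t ht; have [i [_ [hi ->]]] := In_map_filter _ _ _ _ _ _ ht; by exists i; split => //; apply/asboolP.
  have taus : is_scheme mu0 tau.
    split.
      by move=> t /hIn [i [hi ->]] /=; case/andP: (m0v' i hi).
    split.
      rewrite /tau big_map big_filter /=.
      rewrite -hsum1 (eq_bigr (fun i => cm m0 i * 1)) => [|i _]; last by rewrite mulr1.
      by rewrite hfilt; apply: eq_bigr => i _; rewrite mulr1.
    move=> w; rewrite /tau big_map big_filter /= hfilt; exact: hg.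
  have tauf : true_bias_feasible mu0 uR al tau.
    split => // t /hIn [i [[hr [hreg _]] ->]] /=; by split.
  have tauv : value uS tau = M.
    rewrite /value /tau big_map big_filter /= hfilt; exact: hv.
  exists tau; split.
    split => // sg hsg; rewrite tauv; exact: M_ub.
  apply: sum_filter0 => t /hIn [i [[hr [hreg hst]] ->]] /= /existsP [a' /andP [hm /eqP he]].
  case: (eqVneq a' i.1) => hai.
    by move: hm; rewrite hai /movable duaa eqxx.
  by have := hst a' hai hm; rewrite he ltxx.
left.
have c4 : 0 < h m0 / 4 by apply: divr_gt0.
have B0 := Bnd_ge0 uS.
have [v [sg [sgf ->]] hvM] := sup_adherent c4 hsupE.
have [ep ep0 Hep] := approx mu0 uS uR al a0 al0 (conj mu0pos mu01) hdef sg sgf _ c4.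
have cpos : 0 < h m0 / (2 * (Bnd uS + 1)) by apply: divr_gt0 => //; lra.
exists (h m0 / (2 * (Bnd uS + 1))), ep; split => //; split => //.
move=> lo hi lo0 la ah hi1 he tau [[tsch treg] [tvert topt]].
have [sg' [sg'f sg'v]] := Hep lo hi lo0 la ah he.
have vt1 : value uS sg' <= value uS tau by apply: topt.
have vt2 : value uS tau <= M.
  by apply: M_ub; apply: (isafe_tb mu0 uR lo al hi tau lo0 la ah); split.
rewrite leNgt; apply/negP => hlt.
have [tp0 [tp1 tbay]] := tsch.
pose info := fun t : atom R Omega A => [exists a', movable mu0 uR (atom_a t) a' &&
                     (du uR (atom_a t) a' (atom_nu t) == b_J mu0 uR (atom_a t) a' lo hi)].
pose idx := fun t : atom R Omega A => ((atom_a t, actset mu0 uR (atom_a t) (atom_nu t)) : @Ix Omega A).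
have nonI : forall t, List.In t tau -> ~~ info t -> forall a', a' != atom_a t ->
    movable mu0 uR (atom_a t) a' -> b_J mu0 uR (atom_a t) a' lo hi < du uR (atom_a t) a' (atom_nu t).
  move=> t ht hn a' ha hm; have [[_ hr] _] := treg t ht; rewrite lt_def (hr a' ha) andbT.
  apply: contra hn => he'; apply/existsP; exists a'; by rewrite hm he'.
have ptE : forall t, List.In t tau -> ~~ info t -> pt mu0 uR (idx t) = atom_nu t.
  move=> t ht hn; apply: (pt_eq mu0 uR _ lo hi _ (tvert t ht)); exact: nonI t ht hn.
have validI : forall t, List.In t tau -> ~~ info t -> valid mu0 uR al (idx t).
  move=> t ht hn; rewrite /valid /= (ptE t ht hn).
  have [rg [nu hnu]] := treg t ht.
  split; first exact: (intIC_relevant mu0 uR lo al hi _ _ lo0 la ah hnu).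
  split; first exact: (regionJ_alpha mu0 uR lo al hi _ _ lo0 la ah rg).
  move=> a' ha hm; apply: le_lt_trans (bJ_ge mu0 uR _ _ _ _ _ lo0 la ah) (nonI t ht hn a' ha hm).
pose cf := fun i : @Ix Omega A => \sum_(t <- tau | ~~ info t && (idx t == i)) atom_p t.
pose mm : 'rV[R]_n := \row_(j < n) cf (enum_val j).
have cmm : forall i, cm mm i = cf i by move=> i; rewrite /cm mxE enum_rankK.
have hmm : h m0 <= h mm.
  apply: Hm => j.
    move=> _; rewrite mxE; apply/andP; split.
      by apply: sum_ge0_In => t ht; exact: tp0.
    by rewrite -tp1; apply: sum_sub_le => t ht; exact: tp0.
  move=> hj; rewrite mxE; apply: sum_filter0 => t ht /andP [hn /eqP hie]; apply: hj.
  by rewrite -hie; exact: validI.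
have e1 : forall (X : @Ix Omega A -> R) (Y : atom R Omega A -> R),
    (forall t, List.In t tau -> ~~ info t -> X (idx t) = Y t) ->
    \sum_i cm mm i * X i = \sum_(t <- tau | ~~ info t) atom_p t * Y t.
  move=> X Y hXY.
  rewrite (eq_bigr (fun i => cf i * X i)) => [|i _]; last by rewrite cmm.
  rewrite /cf (@regroup R _ _ tau (fun t => ~~ info t) idx (fun t => atom_p t) X).
  rewrite big_mkcond [RHS]big_mkcond /=; apply: eq_sum_In => t ht.
  by case: ifP => hn //; rewrite hXY // hn.
have hg : forall w, \sum_i cm mm i * pt mu0 uR i w - mu0 w =
    - \sum_(t <- tau | info t) atom_p t * atom_nu t w.
  move=> w; rewrite (e1 (fun i => pt mu0 uR i w) (fun t => atom_nu t w)); last first.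
    by move=> t ht hn; rewrite ptE.
  rewrite -(tbay w) [X in _ - X](bigID info) /=; ring.
have Pge0 : 0 <= P_info_J mu0 uR lo hi tau by apply: sum_ge0_In => t ht; exact: tp0.
have hgsum : \sum_w `|\sum_i cm mm i * pt mu0 uR i w - mu0 w| = P_info_J mu0 uR lo hi tau.
  rewrite (eq_bigr (fun w => \sum_(t <- tau | info t) atom_p t * atom_nu t w)) => [|w _]; last first.
    rewrite hg normrN ger0_norm //; apply: sum_ge0_In => t ht; apply: mulr_ge0.
      exact: tp0.
    by have [[[hb _] _] _] := treg t ht; apply: hb.
  rewrite exchange_big /= /P_info_J big_mkcond [RHS]big_mkcond /=; apply: eq_sum_In => t ht.
  rewrite -/(info t); case: ifP => _ //; rewrite -mulr_sumr.
  by have [[[_ ->] _] _] := treg t ht; rewrite mulr1.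
have hval : \sum_i cm mm i * valI mu0 uS uR i = value uS tau -
    \sum_(t <- tau | info t) atom_p t * \sum_w atom_nu t w * uS (atom_a t) w.
  rewrite (e1 _ (fun t => \sum_w atom_nu t w * uS (atom_a t) w)); last first.
    by move=> t ht hn; rewrite /valI ptE.
  rewrite /value [X in _ = X - _](bigID info) /=; ring.
have hib : `|\sum_(t <- tau | info t) atom_p t * \sum_w atom_nu t w * uS (atom_a t) w|
    <= P_info_J mu0 uR lo hi tau * Bnd uS.
  apply: le_trans (ler_norm_sum _ _ _) _.
  rewrite /P_info_J mulr_suml big_mkcond [X in _ <= X]big_mkcond /=; apply: ler_sum_In => t ht.
  rewrite -/(info t); case: ifP => _ //; rewrite normrM ger0_norm; last exact: tp0.
  apply: ler_wpM2l; first exact: tp0.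
  by apply: belief_bound; have [[hb _] _] := treg t ht.
have hlt' : P_info_J mu0 uR lo hi tau * (2 * (Bnd uS + 1)) < h m0.
  by rewrite -ltr_pdivlMr //; lra.
have hmm' : h mm <= P_info_J mu0 uR lo hi tau + (h m0 / 2 + P_info_J mu0 uR lo hi tau * Bnd uS).
  rewrite [h mm]/h hgsum; apply: lerD => //.
  rewrite hval.
  set I0 := \sum_(t <- tau | info t) _ in hib *.
  have -> : M - (value uS tau - I0) = (M - value uS tau) + I0 by ring.
  apply: le_trans (ler_normD _ _) _; apply: lerD => //.
  have hvM' : M - h m0 / 4 < value uS sg := hvM.
  rewrite ger0_norm; first lra.
  lra.
lra.
Qed.
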